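(* Let $R$ be a commutative Artinian ring and let $M$ be a non-zero $R$-module which is PS-hollow representable. Suppose that for every PS-hollow submodule $N$ of $M$, the submodule $In(N)$ is a PS-hollow submodule of $M$. Then $M$ has a minimal PS-hollow representation.
   Context: All rings are commutative with unity. An $R$-submodule $N\leq M$ is PS-hollow (pseudo strongly hollow) iff for every ideal $I\leq R$ and every submodule $L\leq M$: $N\subseteq IM+L$ implies $N\subseteq IM$ or $N\subseteq L$. For a PS-hollow $N\leq M$ put $A_N=\{I\leq R \text{ ideal}: N\subseteq IM\}$, $H_N$ the set of minimal elements of $A_N$ (w.r.t. inclusion), and $In(N)=\bigcap_{I\in H_N} IM$ (with $In(N)=M$ if $H_N=\emptyset$). For a set $H$ of ideals, $N$ is $H$-PS-hollow iff $N$ is PS-hollow and $H_N=H$. $M$ is PS-hollow representable iff $M$ is a finite sum of PS-hollow submodules. A minimal PS-hollow representation of $M$ is an expression $M=\sum_{i=1}^n N_i$ where each $N_i$ is $H_i$-PS-hollow (for some $H_i$), such that (1) $In(N_1),\dots,In(N_n)$ are pairwise incomparable (w.r.t. inclusion) and (2) $N_j\not\subseteq\sum_{i\neq j}N_i$ for every $j$. *)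

(* Defs.v *)
From mathcomp Require Import all_boot all_order all_algebra.
Set Implicit Arguments. Unset Strict Implicit. Unset Printing Implicit Defensive.
Import GRing.Theory.
Local Open Scope ring_scope.

Section PSHollow.
Variables (R : comNzRingType) (M : lmodType R).

Definition subsetP (A B : M -> Prop) : Prop := forall x, A x -> B x.

Definition is_ideal (I : R -> Prop) : Prop :=
  [/\ I 0, (forall a b, I a -> I b -> I (a + b)) & (forall r a, I a -> I (r * a))].

Definition is_submodule (N : M -> Prop) : Prop :=
  [/\ N 0, (forall x y, N x -> N y -> N (x + y)) & (forall r x, N x -> N (r *: x))].

Definition IM (I : R -> Prop) : M -> Prop := fun m =>
  exists (n : nat) (a : 'I_n -> R) (x : 'I_n -> M),
    (forall i, I (a i)) /\ m = \sum_(i < n) a i *: x i.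

Definition sum2 (A B : M -> Prop) : M -> Prop := fun m =>
  exists x y, A x /\ B y /\ m = x + y.

Definition PS_hollow (N : M -> Prop) : Prop :=
  is_submodule N /\
  forall (I : R -> Prop) (L : M -> Prop), is_ideal I -> is_submodule L ->
    subsetP N (sum2 (IM I) L) -> subsetP N (IM I) \/ subsetP N L.

Definition A_set (N : M -> Prop) (I : R -> Prop) : Prop :=
  is_ideal I /\ subsetP N (IM I).

Definition H_set (N : M -> Prop) (I : R -> Prop) : Prop :=
  A_set N I /\ forall J, A_set N J -> (forall r, J r -> I r) -> (forall r, I r -> J r).

(* In(N) = intersection of IM over I in H_N (all of M when H_N is empty) *)
Definition In_sub (N : M -> Prop) : M -> Prop := fun m =>
  forall I, H_set N I -> IM I m.

Definition fam_sum n (N : 'I_n -> M -> Prop) (P : pred 'I_n) : M -> Prop := fun m =>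
  exists x : 'I_n -> M, (forall i, P i -> N i (x i)) /\ m = \sum_(i < n | P i) x i.

Definition PS_hollow_representable : Prop :=
  exists n (N : 'I_n -> M -> Prop), (forall i, PS_hollow (N i)) /\
    forall m, fam_sum N predT m.

(* each N_i is H_i-PS-hollow for H_i := H_{N_i}, so "for some H_i" is just PS-hollowness *)
Definition minimal_PS_hollow_representation n (N : 'I_n -> M -> Prop) : Prop :=
  [/\ forall i, PS_hollow (N i),
      forall m, fam_sum N predT m,
      forall i j, i != j -> ~ subsetP (In_sub (N i)) (In_sub (N j))
    & forall j, ~ subsetP (N j) (fam_sum N (fun i => i != j))].

End PSHollow.

Definition artinian (R : comNzRingType) : Prop :=
  forall I : nat -> R -> Prop, (forall k, is_ideal (I k)) ->
    (forall k r, I k.+1 r -> I k r) ->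
    exists k0, forall k, (k0 <= k)%N -> forall r, I k r <-> I k0 r.

(* Main.v *)
Require Import Defs.
From mathcomp Require Import all_boot all_order all_algebra.
From Stdlib Require Import Classical.
Set Implicit Arguments. Unset Strict Implicit.
Import GRing.Theory.
Local Open Scope ring_scope.

Lemma sum_lift (V : zmodType) k (j : 'I_k.+1) (F : 'I_k.+1 -> V) :
  \sum_(i < k.+1 | i != j) F i = \sum_(i < k) F (lift j i).
Proof.
apply: (@addrI _ (F j)).
have H1 := (@bigD1 _ _ _ _ j predT F isT).
have H2 := (@bigD1_ord _ _ _ _ j predT F isT).
simpl in H1, H2. by rewrite -H1 H2.
Qed.

Section S.
Variables (R : comNzRingType) (M : lmodType R).

Definition rep n (N : 'I_n -> M -> Prop) :=
  (forall i, PS_hollow (N i)) /\ forall m, fam_sum N predT m.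

Lemma drop_rep k (N : 'I_k.+1 -> M -> Prop) (j : 'I_k.+1) :
  rep N -> Defs.subsetP (N j) (fam_sum N (fun i => i != j)) ->
  rep (fun i => N (lift j i)).
Proof.
move=> [Hh Hs] Hsub; split; first by move=> i; exact: Hh.
move=> m; have [x [Hx ->]] := Hs m.
have [y [Hy Hyj]] := Hsub _ (Hx j isT).
exists (fun i => x (lift j i) + y (lift j i)); split.
  move=> i _; have [[_ Hadd _] _] := Hh (lift j i).
  apply: Hadd; first exact: Hx.
  apply: Hy; by rewrite eq_sym neq_lift.
rewrite big_split /= -!sum_lift.
have H1 := (@bigD1 _ _ _ _ j predT x isT). simpl in H1.
rewrite H1 Hyj addrC. done.
Qed.

Lemma N_sub_In (N : M -> Prop) : Defs.subsetP N (In_sub N).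
Proof. by move=> x Nx I [[_ HI] _]; apply: HI. Qed.

Lemma main_ind (HIn : forall N : M -> Prop, PS_hollow N -> PS_hollow (In_sub N)) n :
  forall N : 'I_n -> M -> Prop, rep N ->
  exists n (N : 'I_n -> M -> Prop), minimal_PS_hollow_representation N.
Proof.
elim: n {-2}n (leqnn n) => [|n IH] n0 Hn0 N [Hh Hs].
  exists n0, N; split => //.
  - by move=> [i Hi]; have := leq_trans Hi Hn0.
  - by move=> [i Hi]; have := leq_trans Hi Hn0.
have [Hmin|Hnot] := classic (minimal_PS_hollow_representation N).
  by exists n0, N.
have : ~ (forall i j : 'I_n0, i != j -> ~ Defs.subsetP (In_sub (N i)) (In_sub (N j)))
       \/ ~ (forall j, ~ Defs.subsetP (N j) (fam_sum N (fun i => i != j))).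
  apply: NNPP => H; apply: Hnot; split => //.
  - by apply: NNPP => H'; apply: H; left.
  - by apply: NNPP => H'; apply: H; right.
move: Hn0 Hh Hs Hnot; case: n0 N => [|k] N Hn0 Hh Hs _.
  by case=> H; exfalso; apply: H => -[].
have drop j (Hj : Defs.subsetP (N j) (fam_sum N (fun i => i != j))) :
   exists n (N : 'I_n -> M -> Prop), minimal_PS_hollow_representation N.
  by apply: (IH k) => //; exact: (drop_rep (conj Hh Hs) Hj).
case=> H.
  have [i Hi] : exists i, ~ forall j, i != j -> ~ Defs.subsetP (In_sub (N i)) (In_sub (N j)).
    by apply: NNPP => H'; apply: H => i; apply: NNPP => H''; apply: H'; exists i.
  have [j Hj] : exists j, ~ (i != j -> ~ Defs.subsetP (In_sub (N i)) (In_sub (N j))).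
    by apply: NNPP => H'; apply: Hi => j; apply: NNPP => H''; apply: H'; exists j.
  have [Hij Hsub] : i != j /\ Defs.subsetP (In_sub (N i)) (In_sub (N j)).
    split; apply: NNPP => H'; apply: Hj => // ?; exact: H'.
  pose N' := fun l => if l == j then In_sub (N j) else N l.
  have Hh' : forall l, PS_hollow (N' l).
    by move=> l; rewrite /N'; case: eqP => _; [apply: HIn|]; apply: Hh.
  have Hs' : forall m, fam_sum N' predT m.
    move=> m; have [x [Hx ->]] := Hs m; exists x; split => // l _.
    rewrite /N'; case: ifP => [/eqP E|_]; last exact: Hx.
    subst l; apply: N_sub_In; exact: Hx.
  have Hsub' : Defs.subsetP (N' i) (fam_sum N' (fun l => l != i)).
    move=> y Hy; exists (fun l => if l == j then y else 0); split.
      move=> l _ /=; rewrite /N'; case: ifP => [/eqP E|ne].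
        subst l.
        apply: Hsub; apply: N_sub_In; move: Hy; rewrite /N'; case: ifP => // /eqP E; by rewrite E eqxx in Hij.
      by have [[H0 _ _] _] := Hh l.
    rewrite (bigD1 j) /=; last by rewrite eq_sym.
    rewrite eqxx big1 ?addr0 // => l /andP [_ /negbTE ->]; done.
  by apply: (IH k) => //; exact: (drop_rep (conj Hh' Hs') Hsub').
have [j Hj] : exists j, Defs.subsetP (N j) (fam_sum N (fun i => i != j)).
  by apply: NNPP => H'; apply: H => j Hj; apply: H'; exists j.
exact: drop Hj.
Qed.

End S.

Theorem mainTheorem1 (R : comNzRingType) (M : lmodType R) :
  artinian R ->
  (exists m : M, m != 0) ->
  PS_hollow_representable M ->
  (forall N : M -> Prop, PS_hollow N -> PS_hollow (In_sub N)) ->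
  exists n (N : 'I_n -> M -> Prop), minimal_PS_hollow_representation N.
Proof.
move=> _ _ [n [N [Hh Hs]]] HIn.
exact: (@main_ind R M HIn n N (conj Hh Hs)).
Qed.
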